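(* In the commutative toric non-degenerate setting described in the context, the automorphism group of $\bar\Gamma$ lifts via the gauging action to automorphisms of the torus: for every automorphism $\phi$ of $\bar\Gamma$ there is a unique $*$-automorphism $\psi_\phi$ of $C(T^n)$ with $\psi_\phi(wt(f))=wt'_\phi(\phi(f))$ for all oriented edges $f$; it is of the form $\psi_\phi(F)=F\circ h_\phi$ for a homeomorphism $h_\phi$ of $T^n$, and $\phi\mapsto\psi_\phi$ is a group homomorphism from $\mathrm{Aut}(\bar\Gamma)$ to the group of $*$-automorphisms of $C(T^n)$. Moreover, if $t\in T^n$ satisfies $h_\phi(t)=t$, then the re-gauging is an enhanced symmetry of the corresponding Hamiltonian: the matrix $M_\phi(t)$ commutes with $H_{\boldsymbol\tau}(t)$.
   Context: $\bar\Gamma$ is a finite connected graph (multiple edges and loops allowed) with $k$ vertices and $n=|E(\bar\Gamma)|-k+1$ independent cycles; $\bar f$ is the reverse of an oriented edge $f$. An automorphism of $\bar\Gamma$ is a pair of bijections of vertices and edges preserving incidence; it acts on oriented edges. Fix an ordered rooted spanning tree $\boldsymbol\tau=(\tau,r,<)$: a spanning tree $\tau$, root $r$, and vertex order $u_1<\dots<u_k$ with $u_1=r$. For a spanning tree $\sigma$ and vertices $x,y$, $\sigma[x\to y]$ is the unique non-backtracking path in $\sigma$ from $x$ to $y$. Let $T^n=(S^1)^n$ with coordinate functions $z_1,\dots,z_n\in C(T^n)$. Choose an orientation $e_1,\dots,e_n$ of the edges not in $\tau$ and define $wt$ on oriented edges by $wt(f)=1$ if $f$ lies in $\tau$, $wt(e_j)=z_j$,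 $wt(\bar e_j)=\bar z_j$. For a walk $\gamma$ through $f_1,\dots,f_m$, $wt(\gamma)=\prod_j wt(f_j)$. The matrix Hamiltonian $H_{\boldsymbol\tau}\in M_k(C(T^n))$ has entries $(H_{\boldsymbol\tau})_{ij}=\sum_{f\text{ from }u_j\text{ to }u_i}wt(f)$; $H_{\boldsymbol\tau}(t)\in M_k(\mathbb C)$ is its evaluation at $t\in T^n$. For an automorphism $\phi$ let $\tau'=\phi(\tau)$ with root $r'=\phi(r)$ and pushed-forward order $u'_i=\phi(u_i)$. The re-gauged weight is $wt'_\phi(f):=wt(\tau'[r'\to x],\,f,\,\tau'[y\to r'])$ for $f$ from $x$ to $y$. The re-gauging matrix $M_\phi\in M_k(C(T^n))$ is defined by $M_\phi e_i=\overline{c_i}\,e_{s(i)}$, where $s(i)$ is the index with $\phi(u_{s(i)})=u_i$ and $c_i=wt(\tau[r\to r'],\,\tau'[r'\to u_i],\,\tau[u_i\to r])$; $M_\phi(t)$ is its evaluation at $t$. *)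

(* Defs.v *)
(* Graphs are given in the "dart" model: a finite type V of
   vertices, a finite type D of oriented edges (darts), a source map
   src : D -> V and an orientation-reversal rev : D -> D (fixed-point free
   involution); the unoriented edges are the pairs {d, rev d}.  Loops and
   multiple edges are allowed. *)
From HB Require Import structures.
From mathcomp Require Import all_boot all_order all_algebra.
From mathcomp Require Import complex reals.
From Stdlib Require Import ClassicalEpsilon.
Set Implicit Arguments.
Unset Strict Implicit.
Unset Printing Implicit Defensive.
Import Order.TTheory GRing.Theory Num.Theory.
Local Open Scope ring_scope.

Section Graph.
Variables (V D : finType) (src : D -> V) (rev : D -> D).

Definition tgt (d : D) : V := src (rev d).

Definition is_graph : Prop := involutive rev /\ forall d, rev d != d.

Fixpoint is_walk (x y : V) (p : seq D) : bool :=
  match p with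
  | [::] => x == y
  | d :: p' => (src d == x) && is_walk (tgt d) y p'
  end.

Fixpoint nonbacktracking (p : seq D) : bool :=
  match p with
  | d1 :: ((d2 :: _) as p') => (d2 != rev d1) && nonbacktracking p'
  | _ => true
  end.

Definition connected_in (S : {set D}) : Prop :=
  forall x y : V, exists p : seq D, is_walk x y p && all (mem S) p.

Definition graph_connected : Prop := connected_in [set: D].

(* spanning tree: a set of (unoriented) edges, i.e. a rev-closed dart set,
   whose subgraph is connected, spanning, and acyclic (no cycle = no nonempty
   closed non-backtracking walk, which also excludes loops and multi-edges) *)
Definition spanning_tree (tau : {set D}) : Prop :=
  [/\ forall d, (rev d \in tau) = (d \in tau),
      connected_in tau &
      forall (x : V) (p : seq D), p != [::] -> all (mem tau) p ->
        is_walk x x p -> ~~ nonbacktracking p].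

Definition tree_path (sigma : {set D}) (x y : V) : seq D :=
  epsilon (inhabits [::])
    (fun p => is_walk x y p && all (mem sigma) p && nonbacktracking p).

Definition is_aut (fV : V -> V) (fD : D -> D) : Prop :=
  [/\ bijective fV, bijective fD,
      forall d, src (fD d) = fV (src d) &
      forall d, fD (rev d) = rev (fD d)].

Variable R : realType.
Local Notation C := R[i].

Definition orientation (tau : {set D}) (n : nat) (e : 'I_n -> D) : Prop :=
  [/\ injective e,
      forall j, e j \notin tau,
      forall j l, e j != rev (e l) &
      forall d, d \notin tau -> exists j, d = e j \/ d = rev (e j)].

Variables (tau : {set D}) (n : nat) (e : 'I_n -> D).

Definition wt (d : D) (t : {ffun 'I_n -> C}) : C :=
  if d \in tau then 1 else
  match [pick j | e j == d] with
  | Some j => t j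
  | None => match [pick j | rev (e j) == d] with
            | Some j => (t j)^*
            | None => 1
            end
  end.

Definition wt_walk (p : seq D) (t : {ffun 'I_n -> C}) : C :=
  \prod_(d <- p) wt d t.

Definition wt' (r : V) (fV : V -> V) (fD : D -> D) (f : D)
    (t : {ffun 'I_n -> C}) : C :=
  wt_walk (tree_path (fD @: tau) (fV r) (src f) ++ f
             :: tree_path (fD @: tau) (tgt f) (fV r)) t.

Variables (u : 'I_#|V| -> V).

Definition Ham (t : {ffun 'I_n -> C}) : 'M[C]_#|V| :=
  \matrix_(i, j) \sum_(d | (src d == u j) && (tgt d == u i)) wt d t.

Definition regauge_c (r : V) (fV : V -> V) (fD : D -> D) (i : 'I_#|V|)
    (t : {ffun 'I_n -> C}) : C :=
  wt_walk (tree_path tau r (fV r) ++ tree_path (fD @: tau) (fV r) (u i)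
             ++ tree_path tau (u i) r) t.

Definition Mphi (r : V) (fV : V -> V) (fD : D -> D) (t : {ffun 'I_n -> C})
    : 'M[C]_#|V| :=
  \matrix_(a, b) if fV (u a) == u b then (regauge_c r fV fD b t)^* else 0.

End Graph.

Section Torus.
Variables (R : realType) (n : nat).
Local Notation C := R[i].

Definition torus := {t : {ffun 'I_n -> C} | [forall j, `|t j| == 1]}.

Definition cont (F : torus -> C) : Prop :=
  forall (t : torus) (eps : R), 0 < eps ->
  exists2 delta : R, 0 < delta &
    forall s : torus, (forall j, `|val s j - val t j| < real_complex R delta) ->
      `|F s - F t| < real_complex R eps.

Definition CT := {F : torus -> C | cont F}.

Definition homeomorphism (h : torus -> torus) : Prop :=
  exists g : torus -> torus,
    [/\ cancel h g, cancel g h,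
        forall j, cont (fun t => val (h t) j) &
        forall j, cont (fun t => val (g t) j)].

(* *-automorphism of C(T^n): bijective, unital, C-linear, multiplicative,
   and *-preserving (operations expressed pointwise on representatives) *)
Definition star_aut (psi : CT -> CT) : Prop :=
  bijective psi /\
  (forall F : CT, (forall t, sval F t = 1) -> forall t, sval (psi F) t = 1) /\
  [/\
      forall F G H : CT, (forall t, sval H t = sval F t + sval G t) ->
        forall t, sval (psi H) t = sval (psi F) t + sval (psi G) t,
      forall (a : C) (F G : CT), (forall t, sval G t = a * sval F t) ->
        forall t, sval (psi G) t = a * sval (psi F) t,
      forall F G H : CT, (forall t, sval H t = sval F t * sval G t) ->
        forall t, sval (psi H) t = sval (psi F) t * sval (psi G) t &
      forall F G : CT, (forall t, sval G t = (sval F t)^*) ->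
        forall t, sval (psi G) t = (sval (psi F) t)^*].

End Torus.

(* Main.v *)
Require Import Defs.
From HB Require Import structures.
From mathcomp Require Import all_boot all_order all_algebra.
From mathcomp Require Import complex reals.
From Stdlib Require Import FunctionalExtensionality ProofIrrelevance Classical.
From mathcomp Require Import ring lra.
Import Order.TTheory GRing.Theory Num.Theory.
Local Open Scope ring_scope.
Set Implicit Arguments.
Unset Strict Implicit.
Unset Printing Implicit Defensive.


Section Analysis.
Variable R : rcfType.
Local Notation C := R[i].

Definition nr (x : C) : R := ComplexField.Normc.normc x.
Lemma normE (x : C) : `|x| = real_complex R (nr x). Proof. reflexivity. Qed.
Lemma ltcRn (x : C) d : (`|x| < real_complex R d) = (nr x < d).
Proof. by rewrite normE ltcR. Qed.
Lemma nr_ge0 x : 0 <= nr x.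
Proof. have := normr_ge0 x; by rewrite normE -(rmorph0 (real_complex R)) lecR. Qed.
Lemma nr_add x y : nr (x + y) <= nr x + nr y.
Proof. have := ler_normD x y; by rewrite !normE -rmorphD lecR. Qed.
Lemma nr_mul x y : nr (x * y) = nr x * nr y.
Proof. apply: complexI; by rewrite rmorphM -!normE normrM. Qed.
Lemma nr_conj x : nr x^* = nr x.
Proof. apply: complexI; by rewrite -!normE norm_conjC. Qed.
Lemma nr_sub x y : nr (x - y) = nr (y - x).
Proof. apply: complexI; by rewrite -!normE distrC. Qed.
Lemma nr_eq0 x : nr x = 0 -> x = 0.
Proof. move=> H; have: `|x| = 0 by rewrite normE H rmorph0.
by move/eqP; rewrite normr_eq0 => /eqP. Qed.
Lemma nr_inv x : nr x^-1 = (nr x)^-1.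
Proof. apply: complexI; by rewrite fmorphV -!normE normfV. Qed.
Lemma nr1 : nr 1 = 1.
Proof. apply: complexI; by rewrite -normE normr1 rmorph1. Qed.
Lemma nr_unit x : (`|x| = 1) <-> nr x = 1.
Proof. rewrite normE; split=> [H|->]; last by rewrite rmorph1.
by apply: complexI; rewrite H rmorph1. Qed.
Lemma nr_gt0 x : x != 0 -> 0 < nr x.
Proof. move=> H; rewrite lt_def nr_ge0 andbT; apply/eqP => /nr_eq0 H0.
by rewrite H0 eqxx in H. Qed.

Lemma lt_min_elim {x y z : R} : x < Num.min y z -> x < y /\ x < z.
Proof. by rewrite lt_min => /andP. Qed.

Variable n : nat.
Variable T : Type.
Variable pt : T -> 'I_n -> C.

Definition cont' (F : T -> C) := forall (t : T) (eps : R), 0 < eps ->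
  exists2 delta : R, 0 < delta &
    forall s : T, (forall j, nr (pt s j - pt t j) < delta) ->
      nr (F s - F t) < eps.

Lemma cont'_cst a : cont' (fun _ => a).
Proof. move=> t eps He; exists 1 => // s _; by rewrite subrr /nr ComplexField.Normc.normc0. Qed.

Lemma cont'_coord j : cont' (fun s => pt s j).
Proof. move=> t eps He; exists eps => // s Hs; exact: Hs. Qed.

Lemma cont'_add F G : cont' F -> cont' G -> cont' (fun s => F s + G s).
Proof.
move=> HF HG t eps He.
have He2 : 0 < eps / 2 by rewrite divr_gt0.
have [d1 Hd1 H1] := HF t _ He2; have [d2 Hd2 H2] := HG t _ He2.
exists (Num.min d1 d2); first by rewrite lt_min Hd1 Hd2.
move=> s Hs.
have A1 := H1 s (fun j => (lt_min_elim (Hs j)).1).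
have A2 := H2 s (fun j => (lt_min_elim (Hs j)).2).
have -> : F s + G s - (F t + G t) = (F s - F t) + (G s - G t) by rewrite opprD addrACA.
apply: (le_lt_trans (nr_add _ _)); lra.
Qed.

Lemma cont'_conj F : cont' F -> cont' (fun s => (F s)^*).
Proof.
move=> HF t eps He; have [d Hd H] := HF t _ He; exists d => // s Hs.
by rewrite -rmorphB nr_conj; apply: H.
Qed.

Lemma cont'_mul F G : cont' F -> cont' G -> cont' (fun s => F s * G s).
Proof.
move=> HF HG t eps He.
set A := nr (F t); set B := nr (G t).
have HA : 0 <= A by apply: nr_ge0. have HB : 0 <= B by apply: nr_ge0.
have He1 : 0 < eps / (2 * (B + 1)) by rewrite divr_gt0 // mulr_gt0 //; lra.
have He2 : 0 < eps / (2 * (A + 1)) by rewrite divr_gt0 // mulr_gt0 //; lra.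
have He1' : 0 < Num.min 1 (eps / (2 * (B + 1))) by rewrite lt_min ltr01 He1.
have [d1 Hd1 H1] := HF t _ He1'; have [d2 Hd2 H2] := HG t _ He2.
exists (Num.min d1 d2); first by rewrite lt_min Hd1 Hd2.
move=> s Hs.
have A1 := H1 s (fun j => (lt_min_elim (Hs j)).1).
have A2 := H2 s (fun j => (lt_min_elim (Hs j)).2).
have [A11 A12] := lt_min_elim A1.
have -> : F s * G s - F t * G t = F s * (G s - G t) + G t * (F s - F t).
  by ring.
apply: (le_lt_trans (nr_add _ _)); rewrite !nr_mul.
set dF := nr (F s - F t) in A11 A12 *; set dG := nr (G s - G t) in A2 *.
have HdF : 0 <= dF by apply: nr_ge0. have HdG : 0 <= dG by apply: nr_ge0.
have HFs : nr (F s) <= A + dF.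
  rewrite /A /dF; have E : F s = F t + (F s - F t) by ring.
  rewrite {1}E; exact: nr_add.
have E1 : (A + 1) * (eps / (2 * (A + 1))) = eps / 2.
  by field; lra.
have E2 : (B + 1) * (eps / (2 * (B + 1))) = eps / 2.
  by field; lra.
have P1 : nr (F s) * dG <= (A + 1) * (eps / (2 * (A + 1))).
  apply: ler_pM; [exact: nr_ge0 | exact: HdG | lra | exact: ltW].
have P2 : B * dF <= B * (eps / (2 * (B + 1))).
  by apply: ler_wpM2l => //; exact: ltW.
have P3 : B * (eps / (2 * (B + 1))) < (B + 1) * (eps / (2 * (B + 1))).
  by rewrite ltr_pM2r //; lra.
move: P1 P2 P3 E1 E2; rewrite -/B -/dF -/dG. move=> P1 P2 P3 E1 E2. lra.
Qed.

Lemma cont'_inv F : cont' F -> (forall s, F s != 0) -> cont' (fun s => (F s)^-1).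
Proof.
move=> HF Hnz t eps He.
set c := nr (F t).
have Hc : 0 < c by apply: nr_gt0.
have Hm : 0 < Num.min (c / 2) (eps * c * c / 2).
  by rewrite lt_min !divr_gt0 // !mulr_gt0.
have [d Hd H] := HF t _ Hm; exists d => // s Hs.
have [B1 B2] := lt_min_elim (H s Hs).
set x := nr (F s - F t) in B1 B2.
have Hx : 0 <= x by apply: nr_ge0.
have HFs : c <= nr (F s) + x.
  rewrite /c /x; have E : F t = F s + (F t - F s) by ring.
  rewrite {1}E; apply: (le_trans (nr_add _ _)); by rewrite nr_sub.
have Hfs : c / 2 < nr (F s) by lra.
have Hfs0 : 0 < nr (F s) by lra.
have Hfs1 : F s != 0 := Hnz s.
have Hft1 : F t != 0 := Hnz t.
have -> : (F s)^-1 - (F t)^-1 = (F t - F s) / (F s * F t).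
  by field; rewrite Hfs1 Hft1.
rewrite nr_mul nr_inv nr_mul nr_sub -/x -/c.
rewrite ltr_pdivrMr ?mulr_gt0 //.
have K : eps * c * (c / 2) < eps * c * nr (F s) by rewrite ltr_pM2l ?mulr_gt0.
have K2 : eps * c * c / 2 = eps * c * (c / 2) by ring.
have K3 : eps * (nr (F s) * c) = eps * c * nr (F s) by ring.
rewrite K3; rewrite K2 in B2; exact: (lt_trans B2 K).
Qed.
End Analysis.

Section Walks.
Variables (V D : finType) (src : D -> V) (rv : D -> D).
Hypothesis Hinv : involutive rv.
Local Notation tgt := (tgt src rv).
Local Notation is_walk := (is_walk src rv).

Definition wend (x : V) (p : seq D) := last x (map tgt p).

Lemma is_walk_cat x y p q :
  is_walk x y (p ++ q) = is_walk x (wend x p) p && is_walk (wend x p) y q.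
Proof.
elim: p x => [|d p IH] x /=; first by rewrite eqxx.
by rewrite IH andbA.
Qed.

Lemma is_walk_catI x y z p q : is_walk x y p -> is_walk y z q -> is_walk x z (p ++ q).
Proof.
elim: p x => [|d p IH] x /=; first by move/eqP ->.
by case/andP=> -> H1 H2; rewrite /= (IH _ H1 H2).
Qed.

Lemma tgt_rv d : tgt (rv d) = src d.
Proof. by rewrite /Defs.tgt Hinv. Qed.

Lemma backtrack p : ~~ nonbacktracking rv p ->
  exists p1 d p2, p = p1 ++ [:: d, rv d & p2].
Proof.
elim: p => [|d1 p IH] //=.
case: p IH => [|d2 p] IH //=.
case/nandP.
- move/negPn/eqP => ->; by exists [::], d1, p.
- move/IH => [p1 [d [p2 E]]]; exists (d1 :: p1), d, p2; by rewrite E.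
Qed.

Lemma walk_drop x y p1 d p2 :
  is_walk x y (p1 ++ [:: d, rv d & p2]) -> is_walk x y (p1 ++ p2).
Proof.
rewrite !is_walk_cat => /andP[-> /=] /and3P[/eqP E _ H].
by rewrite tgt_rv E in H.
Qed.

Lemma nb_exists (S : {set D}) x y p : is_walk x y p -> all (mem S) p ->
  exists q, is_walk x y q && all (mem S) q && nonbacktracking rv q.
Proof.
move: {2}(size p) (leqnn (size p)) => k; elim: k p => [|k IH] p Hk Hw Ha.
- by exists p; rewrite Hw Ha; case: p Hk Hw Ha.
- case Hnb: (nonbacktracking rv p); first by exists p; rewrite Hw Ha.
  have [p1 [d [p2 E]]] := backtrack (negbT Hnb).
  rewrite E in Hw Ha Hk.
  apply: (IH (p1 ++ p2)).
  + by move: Hk; rewrite !size_cat /= !addnS ltnS => /ltnW.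
  + exact: walk_drop Hw.
  + by move: Ha; rewrite !all_cat /= => /andP[-> /and3P[]].
Qed.

Lemma tp_spec (S : {set D}) x y : connected_in src rv S ->
  is_walk x y (tree_path src rv S x y) && all (mem S) (tree_path src rv S x y).
Proof.
move=> Hc; have [p /andP[Hw Ha]] := Hc x y.
have [q Hq] := nb_exists Hw Ha.
have := @ClassicalEpsilon.epsilon_spec _ (inhabits [::])
  (fun p => is_walk x y p && all (mem S) p && nonbacktracking rv p) (ex_intro _ q Hq).
case/andP=> H _; exact: H.
Qed.

Lemma nb_map (f : D -> D) p : injective f -> (forall d, f (rv d) = rv (f d)) ->
  nonbacktracking rv (map f p) = nonbacktracking rv p.
Proof.
move=> Hf Hr; elim: p => [|d1 p IH] //=.
case: p IH => [|d2 p] IH //=.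
by rewrite -Hr (inj_eq Hf); congr (_ && _); exact: IH.
Qed.

Lemma mem_imset_can (f g : D -> D) (A : {set D}) d : cancel f g -> cancel g f ->
  (d \in f @: A) = (g d \in A).
Proof.
move=> fK gK; apply/imsetP/idP => [[d0 H0 ->]|H]; first by rewrite fK.
by exists (g d); rewrite ?gK.
Qed.

Section Aut.
Variables (fV : V -> V) (fD : D -> D).
Hypothesis Haut : is_aut src rv fV fD.

Lemma aut_src d : src (fD d) = fV (src d).
Proof. by case: Haut. Qed.
Lemma aut_rv d : fD (rv d) = rv (fD d).
Proof. by case: Haut. Qed.
Lemma aut_tgt d : tgt (fD d) = fV (tgt d).
Proof. by rewrite /Defs.tgt -aut_rv aut_src. Qed.

Lemma aut_walk x y p : is_walk x y p -> is_walk (fV x) (fV y) (map fD p).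
Proof.
elim: p x => [|d p IH] x /=; first by move/eqP ->.
by case/andP=> /eqP <- H; rewrite aut_src eqxx /= aut_tgt IH.
Qed.

Lemma aut_inv : exists gV gD, [/\ is_aut src rv gV gD, cancel fV gV, cancel gV fV,
  cancel fD gD & cancel gD fD].
Proof.
case: Haut => [[gV fVK gVK] [gD fDK gDK] Hs Hr].
exists gV, gD; split=> //; split.
- by exists fV.
- by exists fD.
- move=> d; apply: (can_inj fVK); by rewrite -Hs gDK gVK.
- move=> d; apply: (can_inj fDK); by rewrite Hr !gDK.
Qed.

Lemma aut_comp gV gD : is_aut src rv gV gD -> is_aut src rv (fV \o gV) (fD \o gD).
Proof.
case: Haut => [HfV HfD Hs Hr] [HgV HgD Hs' Hr'].
split; [exact: bij_comp | exact: bij_comp | move=> d /= | move=> d /=].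
- by rewrite Hs Hs'.
- by rewrite Hr' Hr.
Qed.

End Aut.
Arguments aut_src {fV fD}. Arguments aut_rv {fV fD}. Arguments aut_tgt {fV fD}.
Arguments aut_walk {fV fD} Haut {x y p}. Arguments aut_inv {fV fD}.
Arguments aut_comp {fV fD} Haut {gV gD}.

Lemma aut_tree fV fD (S : {set D}) : is_aut src rv fV fD -> spanning_tree src rv S -> spanning_tree src rv (fD @: S).
Proof.
move=> Haut; case=> Hrc Hc Hac.
have [gV [gD [Hg fVK gVK fDK gDK]]] := aut_inv Haut.
have memE d : (d \in fD @: S) = (gD d \in S) by apply: mem_imset_can.
split.
- move=> d; rewrite !memE.
  case: Hg => _ _ _ Hr'; by rewrite Hr' Hrc.
- move=> x y; have [p /andP[Hw Ha]] := Hc (gV x) (gV y).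
  exists (map fD p); have := aut_walk Haut Hw; rewrite !gVK => -> /=.
  by rewrite all_map; apply/allP => d Hd /=; rewrite memE fDK; exact: (allP Ha).
- move=> x p Hp Ha Hw.
  have Hw' := aut_walk Hg Hw.
  have := Hac (gV x) (map gD p).
  rewrite nb_map; last first.
  + by case: Hg.
  + exact: can_inj gDK.
  apply => //; first by case: p Hp {Ha Hw Hw'}.
  rewrite all_map; apply/allP => d Hd /=; rewrite -memE; exact: (allP Ha).
Qed.
End Walks.

Section Weights.
Variables (R : realType) (V D : finType) (src : D -> V) (rv : D -> D).
Hypothesis Hinv : involutive rv.
Variables (tau : {set D}) (n : nat) (e : 'I_n -> D).
Hypothesis Htree : spanning_tree src rv tau.
Hypothesis He : orientation rv tau e.
Local Notation C := R[i].
Local Notation wt := (@Defs.wt D rv R tau n e).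
Local Notation wtw := (@wt_walk D rv R tau n e).
Local Notation is_walk := (is_walk src rv).
Local Notation tgt := (tgt src rv).
Definition unitp (t : {ffun 'I_n -> C}) := forall j, `|t j| = 1.

Lemma wt_tau d t : d \in tau -> wt d t = 1.
Proof. by rewrite /Defs.wt => ->. Qed.

Lemma wt_e j t : wt (e j) t = t j.
Proof.
case: He => Hinj Hnt _ _; rewrite /Defs.wt (negbTE (Hnt j)).
case: pickP => [j' /eqP /Hinj -> //| /(_ j)]; by rewrite eqxx.
Qed.

Lemma wt_re j t : wt (rv (e j)) t = (t j)^*.
Proof.
case: He => Hinj Hnt Hne _; case: Htree => Hrc _ _.
rewrite /Defs.wt Hrc (negbTE (Hnt j)).
case: pickP => [j' /eqP E|_]; first by move: (Hne j' j); rewrite E eqxx.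
case: pickP => [j' /eqP /(inv_inj Hinv) /Hinj -> //| /(_ j)]; by rewrite eqxx.
Qed.

Lemma wt_rev d t : wt (rv d) t = (wt d t)^*.
Proof.
case: Htree => Hrc _ _.
case Hd: (d \in tau); first by rewrite !wt_tau ?Hrc // conjC1.
case: He => _ _ _ /(_ d (negbT Hd)) [j [->|->]].
- by rewrite wt_re wt_e.
- by rewrite Hinv wt_e wt_re conjCK.
Qed.

Lemma wt_unitp d t : unitp t -> `|wt d t| = 1.
Proof.
move=> Ht; rewrite /Defs.wt; case: (d \in tau); first exact: normr1.
case: pickP => [j _|_]; first exact: Ht.
case: pickP => [j _|_]; [by rewrite norm_conjC Ht | exact: normr1].
Qed.

Lemma wtw_cons d p t : wtw (d :: p) t = wt d t * wtw p t.
Proof. by rewrite /wt_walk big_cons. Qed.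
Lemma wtw_cat p q t : wtw (p ++ q) t = wtw p t * wtw q t.
Proof. by rewrite /wt_walk big_cat. Qed.
Lemma wtw_nil t : wtw [::] t = 1.
Proof. by rewrite /wt_walk big_nil. Qed.

Lemma wtw_unit p t : unitp t -> `|wtw p t| = 1.
Proof.
move=> Ht; elim: p => [|d p IH]; first by rewrite wtw_nil normr1.
by rewrite wtw_cons normrM IH wt_unitp // mulr1.
Qed.

Lemma mul_conj_unit (x : C) : `|x| = 1 -> x * x^* = 1.
Proof. by move=> H; rewrite -normCK H expr1n. Qed.

Lemma wtw_tau p t : all (mem tau) p -> wtw p t = 1.
Proof.
elim: p => [|d p IH] /=; first by rewrite wtw_nil.
by case/andP=> H1 H2; rewrite wtw_cons wt_tau // IH // mulr1.
Qed.

Definition revw (p : seq D) := seq.rev (map rv p).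

Lemma wtw_revw p t : wtw (revw p) t = (wtw p t)^*.
Proof.
rewrite /wt_walk /revw big_rev big_map rmorph_prod.
by apply: eq_bigr => d _; rewrite wt_rev.
Qed.

Lemma walk_revw x y p : is_walk x y p -> is_walk y x (revw p).
Proof.
elim: p x => [|d p IH] x /=; first by move/eqP ->; rewrite /revw /= eqxx.
case/andP=> /eqP Hs H; rewrite /revw map_cons rev_cons -cats1.
apply: (is_walk_catI (IH _ H)).
by rewrite /= eqxx /= tgt_rv // Hs eqxx.
Qed.

Lemma all_revw (S : {set D}) p : (forall d, (rv d \in S) = (d \in S)) ->
  all (mem S) p -> all (mem S) (revw p).
Proof.
move=> Hrc Ha; rewrite /revw all_rev all_map.
apply/allP => d Hd /=; rewrite Hrc; exact: (allP Ha).
Qed.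

Lemma closed_wt1 (S : {set D}) t x p : spanning_tree src rv S -> unitp t ->
  is_walk x x p -> all (mem S) p -> wtw p t = 1.
Proof.
case=> _ _ Hac Ht.
move: {2}(size p) (leqnn (size p)) => k; elim: k p => [|k IH] p Hk Hw Ha.
- by case: p Hk Hw Ha => // _ _ _; rewrite wtw_nil.
- case: (eqVneq p [::]) => [->|Hp]; first by rewrite wtw_nil.
  have [p1 [d [p2 E]]] := backtrack (Hac x p Hp Ha Hw).
  rewrite E in Hw Ha Hk *.
  rewrite !wtw_cat !wtw_cons wt_rev [wt d t * _]mulrA mul_conj_unit ?wt_unitp // mul1r.
  rewrite -wtw_cat; apply: IH.
  + by move: Hk; rewrite !size_cat /= !addnS ltnS => /ltnW.
  + exact: walk_drop Hw.
  + by move: Ha; rewrite !all_cat /= => /andP[-> /and3P[]].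
Qed.

Lemma tree_wt_eq (S : {set D}) t x y p q : spanning_tree src rv S -> unitp t ->
  is_walk x y p -> all (mem S) p -> is_walk x y q -> all (mem S) q ->
  wtw p t = wtw q t.
Proof.
move=> HS Ht Hp Hpa Hq Hqa.
have E : wtw p t * (wtw q t)^* = 1.
  rewrite -wtw_revw -wtw_cat; apply: (closed_wt1 HS Ht (x := x)).
  - exact: is_walk_catI Hp (walk_revw Hq).
  - rewrite all_cat Hpa /=; apply: all_revw => //; by case: HS.
have U : (wtw q t)^* * wtw q t = 1 by rewrite mulrC mul_conj_unit ?wtw_unit.
by rewrite -[wtw p t]mulr1 -U mulrA E mul1r.
Qed.

Section Tree.
Variable S : {set D}.
Hypothesis HS : spanning_tree src rv S.
Local Notation P := (tree_path src rv S).

Lemma tp_walk x y : is_walk x y (P x y).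
Proof. case: HS => _ Hc _; by case/andP: (@tp_spec _ _ _ _ Hinv S x y Hc). Qed.
Lemma tp_all x y : all (mem S) (P x y).
Proof. case: HS => _ Hc _; by case/andP: (@tp_spec _ _ _ _ Hinv S x y Hc). Qed.

Lemma tp_conj x y t : unitp t -> wtw (P y x) t = (wtw (P x y) t)^*.
Proof.
move=> Ht; rewrite -wtw_revw; apply: (tree_wt_eq HS Ht).
- exact: tp_walk.
- exact: tp_all.
- exact: walk_revw (tp_walk x y).
- apply: all_revw; [by case: HS | exact: tp_all].
Qed.

Lemma tp_inv x y t : unitp t -> wtw (P x y) t * wtw (P y x) t = 1.
Proof. by move=> Ht; rewrite (tp_conj x y) // mul_conj_unit ?wtw_unit. Qed.
End Tree.
End Weights.

Section Gauge.
Variables (R : realType) (V D : finType) (src : D -> V) (rv : D -> D).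
Hypothesis Hinv : involutive rv.
Variables (tau : {set D}) (n : nat) (e : 'I_n -> D) (r : V).
Hypothesis Htree : spanning_tree src rv tau.
Hypothesis He : orientation rv tau e.
Local Notation C := R[i].
Local Notation wt := (@Defs.wt D rv R tau n e).
Local Notation wtw := (@wt_walk D rv R tau n e).
Local Notation is_walk := (is_walk src rv).
Local Notation tgt := (tgt src rv).
Local Notation wt' := (@Defs.wt' V D src rv R tau n e r).
Local Notation TP := (tree_path src rv).

Definition Wlk (S : {set D}) a f := TP S a (src f) ++ f :: TP S (tgt f) a.

Lemma wt'W fV fD f t : wt' fV fD f t = wtw (Wlk (fD @: tau) (fV r) f) t.
Proof. by []. Qed.

Lemma Wlk_walk S a f : spanning_tree src rv S -> is_walk a a (Wlk S a f).
Proof.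
move=> HS; apply: is_walk_catI (tp_walk Hinv HS a (src f)) _.
by rewrite /= eqxx /= (tp_walk Hinv HS).
Qed.

Lemma Wlk_all S a f : spanning_tree src rv S -> f \in S -> all (mem S) (Wlk S a f).
Proof.
move=> HS Hf; rewrite /Wlk all_cat /= (tp_all Hinv HS) /= Hf /=; exact: (tp_all Hinv HS).
Qed.

Lemma wt'E fV fD f t : wt' fV fD f t =
  wtw (TP (fD @: tau) (fV r) (src f)) t * wt f t * wtw (TP (fD @: tau) (tgt f) (fV r)) t.
Proof. by rewrite wt'W /Wlk wtw_cat wtw_cons mulrA. Qed.

Lemma wt'_unit fV fD f t : unitp t -> `|wt' fV fD f t| = 1.
Proof. by move=> Ht; rewrite wt'W wtw_unit. Qed.

Definition hfun fV fD (t : {ffun 'I_n -> C}) : {ffun 'I_n -> C} :=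
  [ffun j => wt' fV fD (fD (e j)) t].

Lemma hfunE fV fD t j : hfun fV fD t j = wt' fV fD (fD (e j)) t.
Proof. by rewrite /hfun ffunE. Qed.

Lemma hfun_unit fV fD t : unitp t -> unitp (hfun fV fD t).
Proof. by move=> Ht j; rewrite /hfun ffunE wt'_unit. Qed.

Section Phi.
Variables (fV : V -> V) (fD : D -> D).
Hypothesis Haut : is_aut src rv fV fD.
Let HS := aut_tree Haut Htree.
Local Notation P := (TP (fD @: tau)).

Lemma wt'_rev f t : unitp t -> wt' fV fD (rv f) t = (wt' fV fD f t)^*.
Proof.
move=> Ht.
have E1 : wtw (P (fV r) (tgt f)) t = (wtw (P (tgt f) (fV r)) t)^*
  := tp_conj Hinv Htree He HS _ _ Ht.
have E2 : wtw (P (src f) (fV r)) t = (wtw (P (fV r) (src f)) t)^*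
  := tp_conj Hinv Htree He HS _ _ Ht.
rewrite !wt'E (tgt_rv src Hinv) E2 (wt_rev Hinv Htree He) !rmorphM.
have -> : src (rv f) = tgt f by [].
rewrite E1; ring.
Qed.

Lemma wt'_tree f t : unitp t -> f \in fD @: tau -> wt' fV fD f t = 1.
Proof.
move=> Ht Hf; rewrite wt'W.
exact: (closed_wt1 Hinv Htree He HS Ht (Wlk_walk _ _ HS) (Wlk_all _ HS Hf)).
Qed.

Lemma wt_hfun d t : unitp t -> wt d (hfun fV fD t) = wt' fV fD (fD d) t.
Proof.
move=> Ht.
case Hd: (d \in tau).
  by rewrite wt_tau // wt'_tree // imset_f.
case: He => _ _ _ /(_ d (negbT Hd)) [j [->|->]].
- by rewrite (wt_e He) /hfun ffunE.
- by rewrite (wt_re Hinv Htree He) /hfun ffunE (aut_rv Haut) wt'_rev.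
Qed.

Lemma regroup (A w B B' M Y : C) : B * B' = 1 -> A * w * B * (B' * M * Y) = A * (w * M) * Y.
Proof.
move=> H; have -> : A * w * B * (B' * M * Y) = A * w * M * Y * (B * B') by ring.
by rewrite H mulr1 !mulrA.
Qed.

Lemma wtw_hfun x y p t : unitp t -> is_walk x y p ->
  wtw p (hfun fV fD t) = wtw (P (fV r) (fV x)) t * wtw (map fD p) t * wtw (P (fV y) (fV r)) t.
Proof.
move=> Ht; elim: p x => [|d p IH] x /=.
  by move/eqP <-; rewrite !wtw_nil mulr1 (tp_inv Hinv Htree He HS).
case/andP=> /eqP Hs Hw.
rewrite !wtw_cons wt_hfun // (IH _ Hw) wt'E (aut_src Haut) (aut_tgt Haut) Hs.
by rewrite regroup // (tp_inv Hinv Htree He HS).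
Qed.
End Phi.

Lemma map_in (fD gD : D -> D) (p : seq D) : all (mem (gD @: tau)) p -> all (mem ((fD \o gD) @: tau)) (map fD p).
Proof.
move=> HWa; rewrite all_map; apply/allP => d Hd /=.
have := allP HWa d Hd; case/imsetP => d0 H0 ->.
by rewrite -[fD (gD d0)]/((fD \o gD) d0) imset_f.
Qed.

Lemma hfun_comp fV fD gV gD t : is_aut src rv fV fD -> is_aut src rv gV gD -> unitp t ->
  hfun (fV \o gV) (fD \o gD) t = hfun gV gD (hfun fV fD t).
Proof.
move=> Hf Hg Ht; apply/ffunP => j; rewrite /hfun !ffunE.
have HSg := aut_tree Hg Htree.
have HSf := aut_tree Hf Htree.
have HSfg := aut_tree (aut_comp Hf Hg) Htree.
rewrite wt'E [RHS]wt'W (wtw_hfun Hf Ht (Wlk_walk _ _ HSg)).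
rewrite /Wlk map_cat map_cons !wtw_cat !wtw_cons.
set G1 := TP (gD @: tau) (gV r) (src (gD (e j))).
set G2 := TP (gD @: tau) (tgt (gD (e j))) (gV r).
have E1 : wtw (TP ((fD \o gD) @: tau) ((fV \o gV) r) (src ((fD \o gD) (e j)))) t
          = wtw (map fD G1) t.
  apply: (tree_wt_eq Hinv Htree He HSfg Ht (tp_walk Hinv HSfg _ _) (tp_all Hinv HSfg _ _)).
  - have := aut_walk Hf (tp_walk Hinv HSg (gV r) (src (gD (e j)))).
    by rewrite -(aut_src Hf).
  - exact: map_in (tp_all Hinv HSg _ _).
have E2 : wtw (TP ((fD \o gD) @: tau) (tgt ((fD \o gD) (e j))) ((fV \o gV) r)) t
          = wtw (map fD G2) t.
  apply: (tree_wt_eq Hinv Htree He HSfg Ht (tp_walk Hinv HSfg _ _) (tp_all Hinv HSfg _ _)).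
  - have := aut_walk Hf (tp_walk Hinv HSg (tgt (gD (e j))) (gV r)).
    by rewrite -(aut_tgt Hf).
  - exact: map_in (tp_all Hinv HSg _ _).
rewrite E1 E2.
have I := tp_inv Hinv Htree He HSf (fV r) (fV (gV r)) Ht.
rewrite -[LHS]mul1r -I /=; ring.
Qed.

Lemma hfun_id fV fD t : (forall v, fV v = v) -> (forall d, fD d = d) ->
  hfun fV fD t = t.
Proof.
move=> HV HD; apply/ffunP => j; rewrite /hfun ffunE wt'E.
have -> : fD @: tau = tau by rewrite (eq_imset _ HD) imset_id.
rewrite HV HD (wt_e He) !wtw_tau ?mul1r ?mulr1 //; exact: (tp_all Hinv Htree).
Qed.

End Gauge.

Section Lip.
Variables (R : realType) (D : finType) (rv : D -> D) (tau : {set D}) (n : nat) (e : 'I_n -> D).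
Local Notation C := R[i].
Local Notation wt := (@Defs.wt D rv R tau n e).
Local Notation wtw := (@wt_walk D rv R tau n e).

Lemma wt_lip d (s t : {ffun 'I_n -> C}) (delta : R) : 0 < delta ->
  (forall j, nr (s j - t j) < delta) -> nr (wt d s - wt d t) <= delta.
Proof.
move=> Hd Hs; rewrite /Defs.wt.
case: (d \in tau); first by rewrite subrr /nr ComplexField.Normc.normc0 ltW.
case: pickP => [j _|_]; first exact: ltW.
case: pickP => [j _|_]; first by rewrite -rmorphB nr_conj ltW.
by rewrite subrr /nr ComplexField.Normc.normc0 ltW.
Qed.

Lemma wtw_lip p (s t : {ffun 'I_n -> C}) (delta : R) : unitp s -> unitp t -> 0 < delta ->
  (forall j, nr (s j - t j) < delta) -> nr (wtw p s - wtw p t) <= (size p)%:R * delta.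
Proof.
move=> Us Ut Hd Hs; elim: p => [|d p IH].
  by rewrite !wtw_nil subrr /nr ComplexField.Normc.normc0 mul0r.
rewrite !wtw_cons.
have -> : wt d s * wtw p s - wt d t * wtw p t
  = wt d s * (wtw p s - wtw p t) + wtw p t * (wt d s - wt d t) by ring.
apply: (le_trans (nr_add _ _)); rewrite !nr_mul.
have N1 : nr (wt d s) = 1 by apply/nr_unit/wt_unitp.
have N2 : nr (wtw p t) = 1 by apply/nr_unit/wtw_unit.
rewrite N1 N2 !mul1r /= -addn1 natrD mulrDl mul1r.
have := wt_lip d Hd Hs; lra.
Qed.
End Lip.

Section Torus.
Variables (R : realType) (V D : finType) (src : D -> V) (rv : D -> D).
Hypothesis Hinv : involutive rv.
Variables (tau : {set D}) (n : nat) (e : 'I_n -> D) (r : V).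
Hypothesis Htree : spanning_tree src rv tau.
Hypothesis He : orientation rv tau e.
Local Notation C := R[i].
Local Notation T := (torus R n).
Local Notation wt := (@Defs.wt D rv R tau n e).
Local Notation wtw := (@wt_walk D rv R tau n e).
Local Notation wt' := (@Defs.wt' V D src rv R tau n e r).
Local Notation hfun := (@hfun R V D src rv tau n e r).
Local Notation pt := (fun s : T => val s).

Lemma unitT (t : T) : unitp (val t).
Proof. by move=> j; apply/eqP; move/forallP: (valP t). Qed.

Lemma unitp_torus (f : {ffun 'I_n -> C}) : unitp f -> [forall j, `|f j| == 1].
Proof. by move=> H; apply/forallP => j; rewrite H. Qed.

Definition hT fV fD (t : T) : T :=
  exist _ (hfun fV fD (val t)) (unitp_torus (hfun_unit src rv tau e r fV fD (unitT t))).

Lemma hTE fV fD t : val (hT fV fD t) = hfun fV fD (val t).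
Proof. by []. Qed.

Lemma cont'E (F : T -> C) : cont F <-> cont' pt F.
Proof.
split=> H t eps He'; have [d Hd Hs] := H t eps He'; exists d => // s Hj.
- by rewrite -ltcRn; apply: Hs => j; rewrite ltcRn.
- by rewrite ltcRn; apply: Hs => j; rewrite -ltcRn.
Qed.

Definition Msz (fV : V -> V) (fD : D -> D) : nat :=
  \sum_(j < n) size (Wlk src rv (fD @: tau) (fV r) (fD (e j))).

Lemma hT_lip fV fD (s t : T) (delta : R) : 0 < delta ->
  (forall j, nr (val s j - val t j) < delta) ->
  forall j, nr (val (hT fV fD s) j - val (hT fV fD t) j) <= (Msz fV fD)%:R * delta.
Proof.
move=> Hd Hs j; rewrite !hTE !hfunE !wt'W.
apply: (le_trans (wtw_lip rv tau e _ (unitT s) (unitT t) Hd Hs)).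
apply: ler_wpM2r; first exact: ltW.
rewrite ler_nat /Msz (bigD1 j) //=; exact: leq_addr.
Qed.

Lemma cont'_hT fV fD (F : T -> C) : cont' pt F -> cont' pt (fun s => F (hT fV fD s)).
Proof.
move=> HF t eps Heps.
have [d1 Hd1 H1] := HF (hT fV fD t) eps Heps.
set M := (Msz fV fD)%:R : R.
have HM : 0 <= M by rewrite ler0n.
have Hdp : 0 < d1 / (M + 1) by rewrite divr_gt0 //; lra.
exists (d1 / (M + 1)) => // s Hs; apply: H1 => j.
apply: (le_lt_trans (hT_lip fV fD Hdp Hs j)).
rewrite -/M mulrA ltr_pdivrMr; last lra.
nra.
Qed.
End Torus.

Section CTops.
Variables (R : realType) (n : nat).
Local Notation C := R[i].
Local Notation T := (torus R n).

Lemma cont_cst a : cont (fun _ : T => a).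
Proof. apply/cont'E; exact: cont'_cst. Qed.
Lemma cont_coord j : cont (fun s : T => val s j).
Proof. apply/cont'E; exact: cont'_coord. Qed.
Lemma cont_add (F G : T -> C) : cont F -> cont G -> cont (fun s => F s + G s).
Proof. move=> /cont'E HF /cont'E HG; apply/cont'E; exact: cont'_add. Qed.
Lemma cont_mul (F G : T -> C) : cont F -> cont G -> cont (fun s => F s * G s).
Proof. move=> /cont'E HF /cont'E HG; apply/cont'E; exact: cont'_mul. Qed.
Lemma cont_conj (F : T -> C) : cont F -> cont (fun s => (F s)^*).
Proof. move=> /cont'E HF; apply/cont'E; exact: cont'_conj. Qed.
Lemma cont_inv (F : T -> C) : cont F -> (forall s, F s != 0) -> cont (fun s => (F s)^-1).
Proof. move=> /cont'E HF H; apply/cont'E; exact: cont'_inv. Qed.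

Definition cstCT a : CT R n := exist _ _ (cont_cst a).
Definition coordCT j : CT R n := exist _ _ (cont_coord j).
Definition addCT (F G : CT R n) : CT R n := exist _ _ (cont_add (svalP F) (svalP G)).
Definition mulCT (F G : CT R n) : CT R n := exist _ _ (cont_mul (svalP F) (svalP G)).
Definition conjCT (F : CT R n) : CT R n := exist _ _ (cont_conj (svalP F)).
Definition sqCT (F : CT R n) : CT R n := mulCT F (conjCT F).
Fixpoint sumCT (G : 'I_n -> CT R n) (l : seq 'I_n) : CT R n :=
  match l with [::] => cstCT 0 | j :: l' => addCT (G j) (sumCT G l') end.

Lemma sumCTE G l t : sval (sumCT G l) t = \sum_(j <- l) sval (G j) t.
Proof. elim: l => [|j l IH] /=; by rewrite ?big_nil ?big_cons ?IH. Qed.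

Lemma CT_ext (F G : CT R n) : (forall t, sval F t = sval G t) -> F = G.
Proof.
case: F => F HF; case: G => G HG /= H.
have E := functional_extensionality _ _ H; subst G.
by rewrite (proof_irrelevance _ HF HG).
Qed.

Section Chi.
Variable chi : CT R n -> CT R n.
Hypothesis Hchi : star_aut chi.

Lemma chi_cst a t : sval (chi (cstCT a)) t = a.
Proof.
case: Hchi => _ [H1 [_ Hs _ _]].
rewrite (Hs a (cstCT 1) (cstCT a)) ?H1 ?mulr1 //= => s; by rewrite mulr1.
Qed.
Lemma chi_add F G t : sval (chi (addCT F G)) t = sval (chi F) t + sval (chi G) t.
Proof. case: Hchi => _ [_ [Ha _ _ _]]; by apply: Ha. Qed.
Lemma chi_mul F G t : sval (chi (mulCT F G)) t = sval (chi F) t * sval (chi G) t.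
Proof. case: Hchi => _ [_ [_ _ Hm _]]; by apply: Hm. Qed.
Lemma chi_conj F t : sval (chi (conjCT F)) t = (sval (chi F) t)^*.
Proof. case: Hchi => _ [_ [_ _ _ Hc]]; by apply: Hc. Qed.
Lemma chi_sq F t : sval (chi (sqCT F)) t = sval (chi F) t * (sval (chi F) t)^*.
Proof. by rewrite chi_mul chi_conj. Qed.
Lemma chi_sum G l t : sval (chi (sumCT G l)) t = \sum_(j <- l) sval (chi (G j)) t.
Proof. elim: l => [|j l IH] /=; by rewrite ?big_nil ?big_cons ?chi_cst ?chi_add ?IH. Qed.

Lemma chi_zero (K : CT R n) t : sval (chi K) t = 0 -> exists s, sval K s = 0.
Proof.
move=> H0; apply: NNPP => Hn.
have Hnz : forall s, sval K s != 0.
  by move=> s; apply/eqP => E; apply: Hn; exists s.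
pose Ki : CT R n := exist _ _ (cont_inv (svalP K) Hnz).
case: Hchi => _ [H1 [_ _ Hm _]].
have E : sval (chi (cstCT 1)) t = sval (chi K) t * sval (chi Ki) t.
  by apply: Hm => s /=; rewrite mulfV.
rewrite chi_cst H0 mul0r in E.
by move: (@oner_eq0 C); rewrite E eqxx.
Qed.
End Chi.
End CTops.

Section Mcomm.
Variables (R : realType) (V D : finType) (src : D -> V) (rv : D -> D).
Hypothesis Hinv : involutive rv.
Variables (tau : {set D}) (n : nat) (e : 'I_n -> D) (r : V).
Hypothesis Htree : spanning_tree src rv tau.
Hypothesis He : orientation rv tau e.
Variables (u : 'I_#|V| -> V).
Hypothesis Hu : bijective u.
Local Notation C := R[i].
Local Notation wt := (@Defs.wt D rv R tau n e).
Local Notation wtw := (@wt_walk D rv R tau n e).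
Local Notation TP := (tree_path src rv).

Lemma rg (A w B Cc : C) : B * Cc = 1 -> A * w = B * w * A * Cc.
Proof. move=> H; rewrite -[A * w]mulr1 -H; ring. Qed.

Lemma Mphi_comm fV fD (t : {ffun 'I_n -> C}) : is_aut src rv fV fD -> unitp t ->
  hfun src rv tau e r fV fD t = t ->
  Mphi src rv tau e u r fV fD t *m Ham src rv tau e u t
  = Ham src rv tau e u t *m Mphi src rv tau e u r fV fD t.
Proof.
move=> Haut Ht Hfix.
have HS := aut_tree Haut Htree.
have [gV [gD [Hg fVK gVK fDK gDK]]] := aut_inv Haut.
case: Hu => ui uK uiK.
have cE i : regauge_c src rv tau e u r fV fD i t = wtw (TP (fD @: tau) (fV r) (u i)) t.
  rewrite /regauge_c !wtw_cat (wtw_tau rv e t (tp_all Hinv Htree r (fV r))).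
  by rewrite (wtw_tau rv e t (tp_all Hinv Htree (u i) r)) mul1r mulr1.
apply/matrixP => a b; rewrite !mxE.
rewrite (bigD1 (ui (fV (u a)))) //= big1 ?addr0; last first.
  move=> k Hk; rewrite !mxE.
  have -> : (fV (u a) == u k) = false.
    apply/negbTE; apply: contra Hk => /eqP ->; by rewrite uK.
  by rewrite mul0r.
rewrite [RHS](bigD1 (ui (gV (u b)))) //= big1 ?addr0; last first.
  move=> k Hk; rewrite !mxE.
  have -> : (fV (u k) == u b) = false.
    apply/negbTE; apply: contra Hk => /eqP <-; by rewrite fVK uK.
  by rewrite mulr0.
rewrite !mxE !uiK gVK !eqxx.
rewrite (reindex_inj (can_inj fDK)) /=.
rewrite (eq_bigl (fun d => (src d == gV (u b)) && (tgt src rv d == u a))); last first.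
  move=> d; rewrite (aut_src Haut) (aut_tgt Haut).
  by rewrite -{1}[u b]gVK (inj_eq (can_inj fVK)) (inj_eq (can_inj fVK)).
rewrite mulr_sumr mulr_suml; apply: eq_bigr => d /andP[/eqP Hs /eqP Htg].
have := wt_hfun Hinv r Htree He Haut d Ht; rewrite Hfix => ->.
rewrite wt'E (aut_src Haut) (aut_tgt Haut) Hs Htg gVK !cE.
rewrite -!(tp_conj Hinv Htree He HS) //.
have I := tp_inv Hinv Htree He HS (fV r) (u b) Ht.
rewrite uiK; exact: rg.
Qed.
End Mcomm.

Section Final.
Variables (R : realType) (V D : finType) (src : D -> V) (rv : D -> D).
Hypothesis Hinv : involutive rv.
Variables (tau : {set D}) (n : nat) (e : 'I_n -> D) (r : V).
Hypothesis Htree : spanning_tree src rv tau.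
Hypothesis He : orientation rv tau e.
Local Notation C := R[i].
Local Notation T := (torus R n).
Local Notation hT := (hT src rv tau e r).

Lemma hT_comp fV fD gV gD (t : T) : is_aut src rv fV fD -> is_aut src rv gV gD ->
  hT (fV \o gV) (fD \o gD) t = hT gV gD (hT fV fD t).
Proof.
move=> Hf Hg; apply: val_inj; rewrite !hTE.
exact: (hfun_comp Hinv r Htree He Hf Hg (unitT t)).
Qed.

Lemma hT_id fV fD (t : T) : (forall v, fV v = v) -> (forall d, fD d = d) -> hT fV fD t = t.
Proof. move=> HV HD; apply: val_inj; rewrite hTE; exact: (hfun_id Hinv r Htree He). Qed.

Lemma cont_hT fV fD (F : T -> C) : cont F -> cont (fun t => F (hT fV fD t)).
Proof. move=> /cont'E HF; apply/cont'E; exact: cont'_hT. Qed.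

Lemma cont_hT_coord fV fD j : cont (fun t : T => val (hT fV fD t) j).
Proof. exact: (@cont_hT fV fD (fun s => val s j) (cont_coord j)). Qed.

Definition psiT fV fD (F : CT R n) : CT R n := exist _ _ (cont_hT fV fD (svalP F)).

Lemma psiTE fV fD F t : sval (psiT fV fD F) t = sval F (hT fV fD t).
Proof. by []. Qed.
End Final.

Theorem mainTheorem4 (R : realType) (V D : finType) (src : D -> V)
  (rev : D -> D) (Hgraph : is_graph rev) (Hconn : graph_connected src rev)
  (tau : {set D}) (Htree : spanning_tree src rev tau)
  (r : V) (u : 'I_#|V| -> V) (Hu : bijective u)
  (Hr : forall i : 'I_#|V|, val i = 0%N -> u i = r)
  (n : nat) (e : 'I_n -> D) (He : orientation rev tau e) :
  exists (psi : (V -> V) -> (D -> D) -> CT R n -> CT R n)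
         (h : (V -> V) -> (D -> D) -> torus R n -> torus R n),
  [/\ (* psi_phi is a *-automorphism with the prescribed action on weights *)
      forall fV fD, is_aut src rev fV fD ->
        star_aut (psi fV fD) /\
        (forall (f : D) (F : CT R n),
           (forall t, sval F t = wt rev tau e f (val t)) ->
           forall t, sval (psi fV fD F) t
                     = wt' src rev tau e r fV fD (fD f) (val t)),
      (* ... and it is the unique such *-automorphism *)
      forall fV fD, is_aut src rev fV fD ->
        forall chi : CT R n -> CT R n, star_aut chi ->
        (forall (f : D) (F : CT R n),
           (forall t, sval F t = wt rev tau e f (val t)) ->
           forall t, sval (chi F) t
                     = wt' src rev tau e r fV fD (fD f) (val t)) ->
        forall F, chi F = psi fV fD F,
      (* psi_phi(F) = F o h_phi with h_phi a homeomorphism of T^n *)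
      forall fV fD, is_aut src rev fV fD ->
        homeomorphism (h fV fD) /\
        (forall F t, sval (psi fV fD F) t = sval F (h fV fD t)),
      (* phi |-> psi_phi is a group homomorphism *)
      forall fV fD gV gD, is_aut src rev fV fD -> is_aut src rev gV gD ->
        forall F, psi (fV \o gV) (fD \o gD) F = psi fV fD (psi gV gD F) &
      (* at fixed points of h_phi, M_phi(t) commutes with H_tau(t) *)
      forall fV fD, is_aut src rev fV fD ->
        forall t : torus R n, h fV fD t = t ->
          Mphi src rev tau e u r fV fD (val t) *m Ham src rev tau e u (val t)
          = Ham src rev tau e u (val t) *m Mphi src rev tau e u r fV fD (val t)].
Proof.
case: Hgraph => Hinv _.
exists (psiT src rev tau e r), (hT src rev tau e r).
split.
- move=> fV fD Haut; split.
  + have [gV [gD [Hg fVK gVK fDK gDK]]] := aut_inv Haut.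
    split.
      exists (psiT src rev tau e r gV gD) => F; apply: CT_ext => t; rewrite !psiTE.
      * rewrite -(hT_comp Hinv r Htree He _ Hg Haut) (hT_id Hinv r Htree He) //; by move=> ? /=; rewrite ?fVK ?fDK.
      * rewrite -(hT_comp Hinv r Htree He _ Haut Hg) (hT_id Hinv r Htree He) //; by move=> ? /=; rewrite ?gVK ?gDK.
    split; first by move=> F H1 t; rewrite psiTE H1.
    split=> [F G H HH t | a F G HH t | F G H HH t | F G HH t]; by rewrite !psiTE HH.
  + move=> f F HF t; rewrite psiTE HF hTE.
    exact: (wt_hfun Hinv r Htree He Haut f (unitT t)).
- move=> fV fD Haut chi Hchi Hact F; apply: CT_ext => t0; rewrite psiTE.
  set a := sval (chi F) t0.
  set b := val (hT src rev tau e r fV fD t0).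
  pose Aq := addCT F (cstCT n (- a)).
  pose Zq := fun j => addCT (coordCT R j) (cstCT n (- b j)).
  pose K := addCT (sqCT Aq) (sumCT (fun j => sqCT (Zq j)) (index_enum 'I_n)).
  have Hz j : sval (chi (coordCT R j)) t0 = b j.
    rewrite (Hact (e j) (coordCT R j)); first by rewrite /b hTE hfunE.
    by move=> s /=; rewrite (wt_e He).
  have HK : sval (chi K) t0 = 0.
    rewrite chi_add // chi_sq // chi_add // chi_cst // -/a subrr mul0r add0r chi_sum //.
    by rewrite big1 // => j _; rewrite chi_sq // chi_add // chi_cst // Hz subrr mul0r.
  have [s Hs] := chi_zero Hchi HK.
  have nn (x : R[i]) : 0 <= x * x^* by rewrite -normCK exprn_ge0.
  move: Hs; rewrite /K /= sumCTE /= => /eqP.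
  rewrite paddr_eq0 ?sumr_ge0 // => /andP[H1 /eqP H2].
  rewrite -normCK sqrf_eq0 normr_eq0 subr_eq0 in H1.
  have Hsj j : val s j = b j.
    move: (psumr_eq0P (fun i _ => nn _) H2) => /(_ j isT).
    by move/eqP; rewrite /= -normCK sqrf_eq0 normr_eq0 subr_eq0 => /eqP.
  have -> : hT src rev tau e r fV fD t0 = s.
    by apply: val_inj; apply/ffunP => j; rewrite Hsj.
  by rewrite (eqP H1).
- move=> fV fD Haut; split => //.
  have [gV [gD [Hg fVK gVK fDK gDK]]] := aut_inv Haut.
  exists (hT src rev tau e r gV gD); split.
  + move=> t; rewrite -(hT_comp Hinv r Htree He _ Haut Hg) (hT_id Hinv r Htree He) //; by move=> ? /=; rewrite ?gVK ?gDK.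
  + move=> t; rewrite -(hT_comp Hinv r Htree He _ Hg Haut) (hT_id Hinv r Htree He) //; by move=> ? /=; rewrite ?fVK ?fDK.
  + move=> j; exact: cont_hT_coord.
  + move=> j; exact: cont_hT_coord.
- move=> fV fD gV gD Hf Hg F; apply: CT_ext => t; rewrite !psiTE.
  by rewrite (hT_comp Hinv r Htree He _ Hf Hg).
- move=> fV fD Haut t Hfix.
  apply: (Mphi_comm Hinv Htree He Hu Haut (unitT t)).
  by rewrite -hTE Hfix.
Qed.
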